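(* If the triples $(p,q,r)$ and $(p',q',r')$ are dual to each other in the extended strange duality, then the matrix $A_{p,q,r}$ is conjugate in $SL(2;\mathbb Z)$ to the inverse $A_{p',q',r'}^{-1}$.
   Context: For positive integers $p,q,r$ let $A_{p,q,r}=\begin{pmatrix}r-1&-1\\1&0\end{pmatrix}\begin{pmatrix}q-1&-1\\1&0\end{pmatrix}\begin{pmatrix}p-1&-1\\1&0\end{pmatrix}$ (the monodromy of the link of the cusp singularity $x^p+y^q+z^r+axyz$, a $T^2$-bundle over the circle). The extended strange duality pairs of triples are: the self-dual triples $(2,3,7)$, $(2,4,6)$, $(3,3,6)$, $(2,5,5)$, $(3,4,5)$, $(4,4,4)$, and the pairs $(2,3,8)\leftrightarrow(2,4,5)$, $(2,3,9)\leftrightarrow(3,3,4)$, $(2,4,7)\leftrightarrow(3,3,5)$, $(2,5,6)\leftrightarrow(3,4,4)$. *)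

(* Defs.v *)
From mathcomp Require Import all_boot all_order all_algebra.
Set Implicit Arguments. Unset Strict Implicit. Unset Printing Implicit Defensive.
Import GRing.Theory Num.Theory.
Local Open Scope ring_scope.

Definition cusp_factor (n : nat) : 'M[int]_2 :=
  \matrix_(i < 2, j < 2)
    if i == 0 :> nat then (if j == 0 :> nat then n%:Z - 1 else -1)
    else (if j == 0 :> nat then 1 else 0).

Definition A_mat (p q r : nat) : 'M[int]_2 :=
  cusp_factor r *m cusp_factor q *m cusp_factor p.

Definition SL2Z_conj (A B : 'M[int]_2) : Prop :=
  exists P : 'M[int]_2, \det P = 1 /\ P *m A *m invmx P = B.

Definition strange_dual_list : seq ((nat * nat * nat) * (nat * nat * nat)) :=
  [:: ((2,3,7),(2,3,7)); ((2,4,6),(2,4,6)); ((3,3,6),(3,3,6));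
      ((2,5,5),(2,5,5)); ((3,4,5),(3,4,5)); ((4,4,4),(4,4,4));
      ((2,3,8),(2,4,5)); ((2,4,5),(2,3,8));
      ((2,3,9),(3,3,4)); ((3,3,4),(2,3,9));
      ((2,4,7),(3,3,5)); ((3,3,5),(2,4,7));
      ((2,5,6),(3,4,4)); ((3,4,4),(2,5,6)) ]%N.

Definition strange_dual (p q r p' q' r' : nat) : Prop :=
  ((p, q, r), (p', q', r')) \in strange_dual_list.

(* Main.v *)
Require Import Defs.
From mathcomp Require Import all_boot all_order all_algebra.
From mathcomp Require Import ring.
Local Open Scope ring_scope.
Import GRing.Theory.

Definition mk (a b c d : int) : 'M[int]_2 :=
  \matrix_(i < 2, j < 2)
    if i == 0 :> nat then (if j == 0 :> nat then a else b)
    else (if j == 0 :> nat then c else d).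

Lemma cuspE n : cusp_factor n = mk (n%:Z - 1) (-1) 1 0.
Proof. by []. Qed.

Lemma mk_mul a b c d e f g h :
  mk a b c d *m mk e f g h = mk (a*e+b*g) (a*f+b*h) (c*e+d*g) (c*f+d*h).
Proof.
apply/matrixP => i j; rewrite !mxE !big_ord_recl big_ord0 !mxE.
case: i => [[|[|//]] ?]; case: j => [[|[|//]] ?]; rewrite /= ?addr0 /=.
all: by congr (_ * _ + _ * _).
Qed.

Lemma mk_det a b c d : \det (mk a b c d) = a * d - b * c.
Proof.
rewrite (expand_det_row _ ord0) !big_ord_recl big_ord0 /cofactor !det_mx11 !mxE /=.
rewrite expr0 expr1 mul1r; ring.
Qed.

Lemma inv_uniq (M N : 'M[int]_2) : M *m N = 1%:M -> invmx M = N.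
Proof.
move=> H; have [U _] := mulmx1_unit H.
by rewrite -[invmx M]mulmx1 -H mulmxA mulVmx // mul1mx.
Qed.

Lemma key A A' a b c d e f g h :
  A' *m mk e f g h = 1%:M ->
  mk a b c d *m mk d (-b) (-c) a = 1%:M ->
  a * d - b * c = 1 ->
  mk a b c d *m A *m mk d (-b) (-c) a = mk e f g h ->
  SL2Z_conj A (invmx A').
Proof.
move=> H1 H2 H3 H4; exists (mk a b c d); split; first by rewrite mk_det.
by rewrite (inv_uniq _ _ H1) (inv_uniq _ _ H2).
Qed.

Lemma one2 : 1%:M = mk 1 0 0 1 :> 'M[int]_2.
Proof.
apply/matrixP => i j; rewrite !mxE.
case: i => [[|[|//]] ?]; case: j => [[|[|//]] ?]; rewrite /= ?addr0 /=.
all: done.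
Qed.

Ltac solve_mk := rewrite /A_mat ?cuspE ?mk_mul ?one2; reflexivity.

Theorem proposition4p1 (p q r p' q' r' : nat) :
  strange_dual p q r p' q' r' ->
  SL2Z_conj (A_mat p q r) (invmx (A_mat p' q' r')).
Proof.
rewrite /strange_dual /strange_dual_list !inE.
move=> H.
repeat (case/orP: H => [H|H]; [move/eqP: H => [-> -> -> -> -> ->]|]); last move/eqP: H => [-> -> -> -> -> ->].
- by apply: (key _ _ (-3) (10) (-1) (3) (-2) (11) (-1) (5)); solve_mk; solve_mk; solve_mk; solve_mk.
- by apply: (key _ _ (-2) (5) (-1) (2) (-3) (14) (-2) (9)); solve_mk; solve_mk; solve_mk; solve_mk.
- by apply: (key _ _ (-1) (2) (-1) (1) (-2) (9) (-3) (13)); solve_mk; solve_mk; solve_mk; solve_mk.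
- by apply: (key _ _ (-2) (5) (-1) (2) (-4) (15) (-3) (11)); solve_mk; solve_mk; solve_mk; solve_mk.
- by apply: (key _ _ (-1) (2) (-1) (1) (-3) (11) (-5) (18)); solve_mk; solve_mk; solve_mk; solve_mk.
- by apply: (key _ _ (-1) (1) (-2) (1) (-3) (8) (-8) (21)); solve_mk; solve_mk; solve_mk; solve_mk.
- by apply: (key _ _ (-2) (7) (-1) (3) (-3) (11) (-2) (7)); solve_mk; solve_mk; solve_mk; solve_mk.
- by apply: (key _ _ (-3) (7) (-1) (2) (-2) (13) (-1) (6)); solve_mk; solve_mk; solve_mk; solve_mk.
- by apply: (key _ _ (-1) (4) (-1) (3) (-2) (5) (-3) (7)); solve_mk; solve_mk; solve_mk; solve_mk.
- by apply: (key _ _ (-3) (4) (-1) (1) (-2) (15) (-1) (7)); solve_mk; solve_mk; solve_mk; solve_mk.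
- by apply: (key _ _ (-1) (3) (-1) (2) (-2) (7) (-3) (10)); solve_mk; solve_mk; solve_mk; solve_mk.
- by apply: (key _ _ (-2) (3) (-1) (1) (-3) (17) (-2) (11)); solve_mk; solve_mk; solve_mk; solve_mk.
- by apply: (key _ _ (-1) (3) (-1) (2) (-3) (8) (-5) (13)); solve_mk; solve_mk; solve_mk; solve_mk.
- by apply: (key _ _ (-2) (3) (-1) (1) (-4) (19) (-3) (14)); solve_mk; solve_mk; solve_mk; solve_mk.
Qed.
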